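(* Let $\alpha=a+b\sqrt{D}\in\mathbb{R}$ with $a,b\in\mathbb{Q}$, $b\neq 0$, and $D\ge 2$ a squarefree integer, and let $K=\mathbb{Q}(\alpha)$. Then \[\mathcal{A}_1(\alpha)=\left\{\pm 2b\sqrt{D}\,\mathrm{N}(s) : s\in\Lambda^*\setminus\{0\}\right\},\] where $\Lambda^*$ is the lattice in $K$ dual to $\Lambda=\mathbb{Z}+\alpha\mathbb{Z}$ with respect to the trace form.
   Context: For $\alpha\in\mathbb{R}$, $\mathcal{A}_1(\alpha)$ denotes the set of accumulation points in $\mathbb{R}$ of $\{|q|(q\alpha-p):q\in\mathbb{Z}\setminus\{0\},\ p\in\mathbb{Z}\}$. $\mathrm{N}$ and $\mathrm{Tr}$ are the norm and trace maps from $K$ to $\mathbb{Q}$. The trace form on $K$ is $\langle x,y\rangle=\mathrm{Tr}(xy)$. For the lattice $\Lambda=\mathbb{Z}+\alpha\mathbb{Z}$, its dual lattice with respect to the trace form is $\Lambda^*=\{x\in K:\mathrm{Tr}(xy)\in\mathbb{Z}\text{ for all }y\in\Lambda\}$, equivalently $\Lambda^*=\alpha_0^*\mathbb{Z}+\alpha_1^*\mathbb{Z}$ where $\{\alpha_0^*,\alpha_1^*\}\subset K$ is the basis with $\mathrm{Tr}(\alpha_i\alpha_j^* )=\delta_{ij}$ for $\alpha_0=1,\alpha_1=\alpha$. *)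

(* Defs.v *)
From Stdlib Require Export Reals QArith ZArith Qreals.
Open Scope R_scope.

Definition squarefree (D : Z) : Prop :=
  forall k : Z, (k * k | D)%Z -> Z.abs k = 1%Z.

Definition A1_set (alpha : R) (x : R) : Prop :=
  exists q p : Z, q <> 0%Z /\ x = IZR (Z.abs q) * (IZR q * alpha - IZR p).

Definition accum_point (S : R -> Prop) (x : R) : Prop :=
  forall eps : R, 0 < eps -> exists y, S y /\ y <> x /\ Rabs (y - x) < eps.

Definition A1 (alpha : R) (x : R) : Prop := accum_point (A1_set alpha) x.

(* Elements of K = Q(sqrt D) represented as pairs (x, y) meaning x + y sqrt D
   (a Q-basis representation; unique since sqrt D is irrational). *)
Definition Kelt := (Q * Q)%type.

Definition Kmul (D : Z) (u v : Kelt) : Kelt :=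
  ((fst u * fst v + inject_Z D * snd u * snd v)%Q,
   (fst u * snd v + snd u * fst v)%Q).

Definition Kadd (u v : Kelt) : Kelt := ((fst u + fst v)%Q, (snd u + snd v)%Q).

Definition Kof_Z (m : Z) : Kelt := (inject_Z m, 0%Q).

Definition Kscale_Z (m : Z) (u : Kelt) : Kelt :=
  ((inject_Z m * fst u)%Q, (inject_Z m * snd u)%Q).

Definition Ktrace (u : Kelt) : Q := (2 * fst u)%Q.
Definition Knorm (D : Z) (u : Kelt) : Q := (fst u * fst u - inject_Z D * snd u * snd u)%Q.

Definition Kreal (D : Z) (u : Kelt) : R := Q2R (fst u) + Q2R (snd u) * sqrt (IZR D).

Definition Kzero (u : Kelt) : Prop := (fst u == 0)%Q /\ (snd u == 0)%Q.

Definition Q_is_int (r : Q) : Prop := exists z : Z, (r == inject_Z z)%Q.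

Definition in_Lambda (alpha : Kelt) (y : Kelt) : Prop :=
  exists m n : Z, y = Kadd (Kof_Z m) (Kscale_Z n alpha).

Definition in_dual (D : Z) (alpha : Kelt) (s : Kelt) : Prop :=
  forall y : Kelt, in_Lambda alpha y -> Q_is_int (Ktrace (Kmul D s y)).

(* Main.v *)
Require Import Defs.
From Stdlib Require Import Lra Lia Psatz Znumtheory List Classical.
Open Scope R_scope.

Open Scope R_scope.

Lemma pigeon {T : Type} (g : nat -> T) (L : list T) (n : nat) :
  (length L <= n)%nat -> (forall i, (i <= n)%nat -> In (g i) L) ->
  exists i j, (i < j <= n)%nat /\ g i = g j.
Proof.
  intros HL Hin. apply NNPP; intro Hno.
  assert (Hnd : NoDup (map g (seq 0 (S n)))).
  { apply NoDup_map_NoDup_ForallPairs; [|apply seq_NoDup].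
    intros x y Hx Hy Hxy. apply in_seq in Hx; apply in_seq in Hy.
    destruct (Nat.lt_total x y) as [H|[H|H]]; auto;
      exfalso; apply Hno; [exists x, y | exists y, x]; split; auto; lia. }
  apply NoDup_incl_length with (l' := L) in Hnd.
  - rewrite length_map, length_seq in Hnd. lia.
  - intros z Hz. apply in_map_iff in Hz. destruct Hz as [i [<- Hi]].
    apply in_seq in Hi. apply Hin. lia.
Qed.

Definition zr (K : nat) : list Z :=
  map (fun i => (Z.of_nat i - Z.of_nat K)%Z) (seq 0 (2 * K + 1)).

Lemma zr_len K : length (zr K) = (2 * K + 1)%nat.
Proof. unfold zr. rewrite length_map, length_seq. reflexivity. Qed.

Lemma zr_in K z : (Z.abs z <= Z.of_nat K)%Z -> In z (zr K).
Proof.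
  intros H. unfold zr. apply in_map_iff. exists (Z.to_nat (z + Z.of_nat K)).
  split.
  - rewrite Z2Nat.id; lia.
  - apply in_seq. lia.
Qed.

Lemma list_sep (f : Z * Z -> R) (v : R) (l : list (Z * Z)) :
  exists r, 0 < r /\ forall x, In x l -> f x <> v -> r <= Rabs (f x - v).
Proof.
  induction l as [|x l [r [Hr IH]]].
  - exists 1. split; [lra|]. intros x [].
  - destruct (Req_dec (f x) v) as [E|E].
    + exists r. split; auto. intros y [<-|Hy] Hne; [contradiction|auto].
    + exists (Rmin r (Rabs (f x - v))). split.
      * apply Rmin_pos; auto. apply Rabs_pos_lt. lra.
      * intros y [<-|Hy] Hne.
        -- apply Rmin_r.
        -- eapply Rle_trans; [apply Rmin_l|auto].
Qed.

Lemma box_sep (f : Z -> Z -> R) (v : R) (N : nat) :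
  exists r, 0 < r /\ forall q p, (Z.abs q <= Z.of_nat N)%Z -> (Z.abs p <= Z.of_nat N)%Z ->
    f q p <> v -> r <= Rabs (f q p - v).
Proof.
  destruct (list_sep (fun x => f (fst x) (snd x)) v (list_prod (zr N) (zr N))) as [r [Hr H]].
  exists r. split; auto. intros q p Hq Hp Hne.
  apply (H (q, p)); auto. apply in_prod; apply zr_in; auto.
Qed.

Lemma Z_sep (u : R) : exists r, 0 < r /\ forall z : Z, IZR z <> u -> r <= Rabs (IZR z - u).
Proof.
  set (fl := (up u - 1)%Z).
  destruct (archimed u) as [H1 H2].
  assert (Hfl1 : IZR fl <= u). { unfold fl. rewrite minus_IZR. lra. }
  assert (Hfl2 : u < IZR fl + 1). { unfold fl. rewrite minus_IZR. lra. }
  destruct (Req_dec (IZR fl) u) as [E|E].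
  - exists 1. split; [lra|]. intros z Hz.
    assert (z <> fl) by (intro Hzf; rewrite Hzf in Hz; contradiction).
    destruct (Z.lt_total z fl) as [Hl|[Hl|Hl]]; [|contradiction|].
    + apply Z.lt_le_pred in Hl. apply IZR_le in Hl. rewrite <- Z.sub_1_r, minus_IZR in Hl.
      rewrite Rabs_left1; lra.
    + apply Zlt_le_succ in Hl. apply IZR_le in Hl. rewrite succ_IZR in Hl.
      rewrite Rabs_right; lra.
  - exists (Rmin (u - IZR fl) (IZR fl + 1 - u)). split.
    + apply Rmin_pos; lra.
    + intros z Hz.
      destruct (Z.le_gt_cases z fl) as [Hl|Hl].
      * apply IZR_le in Hl. eapply Rle_trans; [apply Rmin_l|]. rewrite Rabs_left1; lra.
      * apply Zlt_le_succ in Hl. apply IZR_le in Hl. rewrite succ_IZR in Hl.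
        eapply Rle_trans; [apply Rmin_r|]. rewrite Rabs_right; lra.
Qed.

Open Scope Z_scope.
Lemma NS (D : Z) : 2 <= D -> squarefree D -> forall k L, k * k = D * L * L -> L = 0.
Proof.
  intros HD Hsf k L E. destruct (Z.eq_dec L 0) as [|HL]; auto. exfalso.
  set (g := Z.gcd k L).
  assert (Hg : 0 < g). { unfold g. pose proof (Z.gcd_nonneg k L).
    assert (g <> 0). { unfold g. intro H0. apply Z.gcd_eq_0 in H0. lia. } unfold g in *; lia. }
  destruct (Z.gcd_divide_l k L) as [k' Hk]. destruct (Z.gcd_divide_r k L) as [L' HL'].
  fold g in Hk, HL'.
  assert (Hc : Z.gcd k' L' = 1).
  { pose proof (Z.gcd_div_gcd k L g ltac:(lia) eq_refl) as H.
    assert (k / g = k') as E1 by (rewrite Hk; apply Z.div_mul; lia).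
    assert (L / g = L') as E2 by (rewrite HL'; apply Z.div_mul; lia).
    rewrite E1, E2 in H. exact H. }
  clearbody g.
  assert (E' : k' * k' = D * L' * L').
  { subst k L. apply Z.mul_reg_l with (g * g); [nia|]. nia. }
  assert (HL1 : (L' | k' * k')). { exists (D * L'). lia. }
  apply Z.gauss in HL1; [| rewrite Z.gcd_comm; exact Hc].
  assert (HL2 : (L' | 1)). { rewrite <- Hc. apply Z.gcd_greatest; auto. apply Z.divide_refl. }
  apply Z.divide_1_r in HL2.
  assert (Ed : D = k' * k') by (destruct HL2; subst; lia).
  assert (Hk1 : Z.abs k' = 1). { apply Hsf. rewrite Ed. apply Z.divide_refl. }
  nia.
Qed.

Open Scope R_scope.

Definition fl (r : R) : Z := (up r - 1)%Z.
Lemma fl_spec r : IZR (fl r) <= r < IZR (fl r) + 1.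
Proof. destruct (archimed r). unfold fl. rewrite minus_IZR. lra. Qed.

Lemma nat_list_in (N : nat) (z : Z) : (0 <= z < Z.of_nat N)%Z -> In z (map Z.of_nat (seq 0 N)).
Proof. intros H. apply in_map_iff. exists (Z.to_nat z). split; [lia|]. apply in_seq. lia. Qed.

Lemma DIR (sM : R) (N : nat) : (1 <= N)%nat ->
  exists x y : Z, (1 <= y <= Z.of_nat N)%Z /\ Rabs (IZR y * sM - IZR x) < 1 / INR N.
Proof.
  intros HN.
  assert (HNr : 1 <= INR N) by (apply (le_INR 1); auto).
  set (fr := fun k : nat => INR k * sM - IZR (fl (INR k * sM))).
  assert (Hfr : forall k, 0 <= fr k < 1).
  { intro k. unfold fr. pose proof (fl_spec (INR k * sM)). lra. }
  set (bx := fun k : nat => fl (INR N * fr k)).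
  destruct (pigeon bx (map Z.of_nat (seq 0 N)) N) as [i [j [Hij Hb]]].
  - rewrite length_map, length_seq. lia.
  - intros i _. apply nat_list_in. unfold bx.
    pose proof (fl_spec (INR N * fr i)). pose proof (Hfr i).
    split.
    + assert (-1 < fl (INR N * fr i))%Z; [|lia].
      apply lt_IZR. assert (0 <= INR N * fr i) by nra. lra.
    + apply lt_IZR. rewrite <- INR_IZR_INZ. assert (INR N * fr i < INR N) by nra. lra.
  - exists (fl (INR j * sM) - fl (INR i * sM))%Z, (Z.of_nat j - Z.of_nat i)%Z.
    split; [lia|].
    rewrite !minus_IZR, <- !INR_IZR_INZ.
    assert (E : (INR j - INR i) * sM - (IZR (fl (INR j * sM)) - IZR (fl (INR i * sM))) = fr j - fr i)
      by (unfold fr; ring).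
    rewrite E.
    unfold bx in Hb.
    pose proof (fl_spec (INR N * fr i)). pose proof (fl_spec (INR N * fr j)).
    rewrite Hb in *.
    assert (Habs : Rabs (INR N * fr j - INR N * fr i) < 1) by (apply Rabs_def1; lra).
    rewrite <- Rmult_minus_distr_l, Rabs_mult, Rabs_right in Habs by lra.
    apply Rmult_lt_reg_l with (INR N); [lra|]. field_simplify; lra.
Qed.

Open Scope R_scope.

Definition ee (M : Z) (xy : Z * Z) : R := IZR (snd xy) * sqrt (IZR M) - IZR (fst xy).
Definition nrm (M : Z) (xy : Z * Z) : Z := (fst xy * fst xy - M * snd xy * snd xy)%Z.
Definition good (M : Z) (xy : Z * Z) : Prop :=
  (1 <= snd xy)%Z /\ ee M xy <> 0 /\ (Z.abs (nrm M xy) <= 2 * M)%Z /\ nrm M xy <> 0%Z.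

Lemma STEP (M : Z) (HM : (1 <= M)%Z) (NSM : forall k L, (k*k = M*L*L)%Z -> L = 0%Z)
  (r : R) (Hr : 0 < r) : exists xy, good M xy /\ Rabs (ee M xy) < r.
Proof.
  destruct (archimed (/ r)) as [H1 H2].
  assert (Hir : 0 < / r) by (apply Rinv_0_lt_compat; auto).
  assert (Hup : (0 < up (/ r))%Z) by (apply lt_IZR; lra).
  set (N := Z.to_nat (up (/ r))).
  assert (HN : (1 <= N)%nat) by (unfold N; lia).
  assert (HNr : INR N = IZR (up (/ r))) by (unfold N; rewrite INR_IZR_INZ, Z2Nat.id by lia; reflexivity).
  destruct (DIR (sqrt (IZR M)) N HN) as [x [y [Hy He]]].
  assert (HMr : 1 <= IZR M) by (apply IZR_le; auto).
  set (sM := sqrt (IZR M)) in *.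
  assert (HsM2 : sM * sM = IZR M) by (apply sqrt_sqrt; lra).
  assert (HsM0 : 0 <= sM) by apply sqrt_pos.
  assert (HsM1 : sM <= IZR M) by nra.
  assert (HNpos : 1 <= INR N) by (apply (le_INR 1); auto).
  assert (HyN : 1 <= IZR y <= INR N) by (rewrite INR_IZR_INZ; split; apply IZR_le; lia).
  assert (Hnr : IZR (x * x - M * y * y) = - (IZR y * sM - IZR x) * (2 * IZR y * sM - (IZR y * sM - IZR x))).
  { rewrite minus_IZR, !mult_IZR. replace (IZR M) with (sM * sM) by auto. ring. }
  assert (Hnz : (x * x - M * y * y <> 0)%Z).
  { intro E. assert (x * x = M * y * y)%Z by lia. apply NSM in H. lia. }
  exists (x, y). unfold good, ee, nrm; cbn [fst snd]. fold sM.
  assert (Hlt : 1 / INR N < r).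
  { apply Rmult_lt_reg_l with (INR N); [lra|]. field_simplify; [|lra].
    apply Rmult_lt_reg_l with (/ r); [auto|]. field_simplify; lra. }
  split; [split; [lia|split; [|split; auto]]|lra].
  - intro E. assert (E2 : IZR (x * x - M * y * y) = IZR 0) by (rewrite Hnr, E; ring).
    apply eq_IZR in E2. contradiction.
  - set (e := IZR y * sM - IZR x) in *.
    apply Rabs_def2 in He. destruct He as [He1 He2].
    assert (HinvN : 1 / INR N <= 1) by (apply Rmult_le_reg_l with (INR N); [lra|]; field_simplify; lra).
    assert (Ha : Rabs (2 * IZR y * sM - e) <= 2 * INR N * sM + 1).
    { apply Rabs_le. split; nra. }
    assert (Hea : Rabs e < 1 / INR N) by (apply Rabs_def1; lra).
    assert (Hb : Rabs (IZR (x * x - M * y * y)) < IZR (2 * M + 1)).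
    { rewrite Hnr, Rabs_mult, Rabs_Ropp.
      apply Rle_lt_trans with (Rabs e * (2 * INR N * sM + 1)).
      - apply Rmult_le_compat_l; auto. apply Rabs_pos.
      - apply Rlt_le_trans with (1 / INR N * (2 * INR N * sM + 1)).
        + apply Rmult_lt_compat_r; auto. nra.
        + rewrite plus_IZR, mult_IZR. field_simplify; [|lra].
          apply Rmult_le_reg_l with (INR N); [lra|]. field_simplify; [|lra]. assert (0 <= INR N * (IZR M - sM)) by (apply Rmult_le_pos; lra). lra. }
    rewrite <- abs_IZR in Hb. apply lt_IZR in Hb. lia.
Qed.

Open Scope R_scope.

Lemma SEQ (M : Z) (HM : (1 <= M)%Z) (NSM : forall k L, (k*k = M*L*L)%Z -> L = 0%Z) :
  forall n : nat, exists f : nat -> Z * Z, (forall i, (i <= n)%nat -> good M (f i)) /\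
    (forall i j, (i < j <= n)%nat -> Rabs (ee M (f j)) < Rabs (ee M (f i))).
Proof.
  induction n as [|n [f [Hg Hd]]].
  - destruct (STEP M HM NSM 1 ltac:(lra)) as [xy [Hxy _]].
    exists (fun _ => xy). split; auto. intros; lia.
  - assert (Hpos : 0 < Rabs (ee M (f n))).
    { apply Rabs_pos_lt. apply (Hg n (le_n n)). }
    destruct (STEP M HM NSM _ Hpos) as [xy [Hxy Hlt]].
    exists (fun i => if Nat.eqb i (S n) then xy else f i). split.
    + intros i Hi. destruct (Nat.eqb_spec i (S n)); auto. apply Hg. lia.
    + intros i j Hij.
      destruct (Nat.eqb_spec j (S n)); destruct (Nat.eqb_spec i (S n)); try lia.
      * destruct (Nat.eq_dec i n) as [->|Hin]; auto.
        eapply Rlt_trans; [exact Hlt|]. apply Hd. lia.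
      * apply Hd. lia.
Qed.

Open Scope Z_scope.

Lemma modeq (a b n : Z) : n <> 0 -> a mod Z.abs n = b mod Z.abs n -> exists k, b = a + n * k.
Proof.
  intros Hn E.
  assert (H : (b - a) mod Z.abs n = 0).
  { rewrite Zminus_mod, E, Z.sub_diag. apply Z.mod_0_l. lia. }
  assert (Hn2 : Z.abs n <> 0) by lia. apply (Z.mod_divide _ _ Hn2) in H.
  destruct H as [k Hk]. destruct (Z.abs_spec n) as [[_ E']|[_ E']]; rewrite E' in Hk;
  [exists k | exists (-k)].
  - assert (n * k = k * n) by ring. lia.
  - assert (n * - k = k * - n) by ring. lia.
Qed.

Lemma unit_from (M x1 y1 x2 y2 : Z) :
  nrm M (x1, y1) = nrm M (x2, y2) -> nrm M (x1, y1) <> 0 ->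
  x1 mod Z.abs (nrm M (x1, y1)) = x2 mod Z.abs (nrm M (x1, y1)) ->
  y1 mod Z.abs (nrm M (x1, y1)) = y2 mod Z.abs (nrm M (x1, y1)) ->
  1 <= y1 -> 1 <= y2 -> (x1, y1) <> (x2, y2) ->
  exists X Y, X * X - M * Y * Y = 1 /\ Y <> 0.
Proof.
  unfold nrm; cbn [fst snd]. set (n := x1 * x1 - M * y1 * y1).
  intros En Hn Hx Hy Hy1 Hy2 Hne.
  destruct (modeq x1 x2 n Hn Hx) as [k1 Ek1].
  destruct (modeq y1 y2 n Hn Hy) as [k2 Ek2].
  exists (1 + x1 * k1 - M * y1 * k2), (x1 * k2 - k1 * y1).
  assert (Hid : n * n * ((1 + x1 * k1 - M * y1 * k2) * (1 + x1 * k1 - M * y1 * k2)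
     - M * (x1 * k2 - k1 * y1) * (x1 * k2 - k1 * y1)) = n * (x2 * x2 - M * y2 * y2)).
  { rewrite Ek1, Ek2. unfold n. ring. }
  assert (Hnn : n * n <> 0) by (intro H0; apply Z.eq_mul_0 in H0; lia).
  split.
  - rewrite <- En in Hid. apply Z.mul_reg_l with (n * n); [exact Hnn|]. rewrite Hid. ring.
  - intro HY.
    assert (Hc : x1 * y2 = x2 * y1).
    { apply Zminus_eq. rewrite Ek1, Ek2.
      transitivity (n * (x1 * k2 - k1 * y1)); [ring | rewrite HY; ring]. }
    clear Hid Ek1 Ek2.
    assert (Hyy : n * (y2 * y2) = n * (y1 * y1)).
    { transitivity ((x1*y2)*(x1*y2) - M * y1 * y1 * y2 * y2); [unfold n; ring|].
      rewrite Hc. transitivity ((x2 * x2 - M * y2 * y2) * (y1 * y1)); [ring|].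
      rewrite <- En. ring. }
    apply Z.mul_reg_l in Hyy; [|auto].
    assert (Hyz : (y2 - y1) * (y2 + y1) = 0) by (transitivity (y2*y2 - y1*y1); [ring|lia]).
    apply Z.eq_mul_0 in Hyz. assert (y1 = y2) by lia. subst y2.
    assert (x1 = x2) by (apply Z.mul_reg_r with y1; [lia|exact Hc]). subst. auto.
Qed.

Open Scope Z_scope.

Lemma PELL (M : Z) (HM : 1 <= M) (NSM : forall k L, k*k = M*L*L -> L = 0) :
  exists X Y, X * X - M * Y * Y = 1 /\ Y <> 0.
Proof.
  set (K := Z.to_nat (2 * M)).
  set (L := list_prod (list_prod (zr K) (zr K)) (zr K)).
  destruct (SEQ M HM NSM (length L)) as [f [Hg Hd]].
  set (cls := fun i => let n := nrm M (f i) in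
                      ((n, fst (f i) mod Z.abs n), snd (f i) mod Z.abs n)).
  destruct (pigeon cls L (length L)) as [i [j [Hij Hc]]]; [lia| |].
  - intros i Hi. destruct (Hg i Hi) as [Hy [He [Hb Hn]]].
    unfold cls. cbv zeta.
    assert (Hp : 0 < Z.abs (nrm M (f i))) by lia.
    pose proof (Z.mod_pos_bound (fst (f i)) _ Hp).
    pose proof (Z.mod_pos_bound (snd (f i)) _ Hp).
    unfold L. apply in_prod; [apply in_prod|]; apply zr_in; unfold K; rewrite Z2Nat.id by lia;
      rewrite ?Z.abs_eq by lia; lia.
  - destruct (Hg i ltac:(lia)) as [Hyi [Hei [Hbi Hni]]].
    destruct (Hg j ltac:(lia)) as [Hyj [Hej [Hbj Hnj]]].
    pose proof (Hd i j Hij) as Hlt.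
    unfold cls in Hc. cbv zeta in Hc. injection Hc as E1 E2 E3.
    destruct (f i) as [x1 y1] eqn:Fi. destruct (f j) as [x2 y2] eqn:Fj.
    cbn [fst snd] in *.
    apply (unit_from M x1 y1 x2 y2); auto.
    + rewrite E2, E1. auto.
    + rewrite E3, E1. auto.
    + intro Heq. rewrite Heq in Hlt. exact (Rlt_irrefl _ Hlt).
Qed.

Open Scope R_scope.

Definition al (A B C : Z) (s0 : R) : R := (IZR A + IZR B * s0) / IZR C.
Definition TT (A B C : Z) (s0 : R) (q p : Z) : R := IZR q * al A B C s0 - IZR p.

Lemma Nm_int A B C D s0 q p : IZR C <> 0 -> s0 * s0 = IZR D ->
  TT A B C s0 q p * TT A B C (- s0) q p =
  IZR ((q*A - p*C)*(q*A - p*C) - q*q*B*B*D) / (IZR C * IZR C).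
Proof.
  intros HC Hs. unfold TT, al.
  rewrite minus_IZR, !mult_IZR, !minus_IZR, !mult_IZR. rewrite <- Hs. field. auto.
Qed.

Lemma key_pos A B C s0 q p : IZR C <> 0 -> IZR B * s0 <> 0 -> (0 < q)%Z ->
  IZR (Z.abs q) * TT A B C s0 q p =
  (TT A B C s0 q p)^2 / (2 * IZR B * s0 / IZR C)
  - TT A B C s0 q p * TT A B C (- s0) q p / (2 * IZR B * s0 / IZR C).
Proof.
  intros HC HB Hq. rewrite Z.abs_eq by lia. unfold TT, al. field. repeat split; auto; intro Hz; apply HB; rewrite Hz; ring.
Qed.

Lemma key_neg A B C s0 q p : IZR C <> 0 -> IZR B * s0 <> 0 -> (q < 0)%Z ->
  IZR (Z.abs q) * TT A B C s0 q p =
  - ((TT A B C s0 q p)^2 / (2 * IZR B * s0 / IZR C))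
  + TT A B C s0 q p * TT A B C (- s0) q p / (2 * IZR B * s0 / IZR C).
Proof.
  intros HC HB Hq. rewrite Z.abs_neq by lia. rewrite opp_IZR. unfold TT, al. field. repeat split; auto; intro Hz; apply HB; rewrite Hz; ring.
Qed.

Definition stp (A B C D X Y : Z) (qp : Z * Z) : Z * Z :=
  let (q, p) := qp in
  ((q * (X + A * C * Y) - p * C * C * Y)%Z, (q * (A * A - B * B * D) * Y + p * (X - A * C * Y))%Z).

Lemma stp_T A B C D X Y s0 qp : IZR C <> 0 -> s0 * s0 = IZR D ->
  TT A B C s0 (fst (stp A B C D X Y qp)) (snd (stp A B C D X Y qp)) =
  (IZR X + IZR (B * C * Y) * s0) * TT A B C s0 (fst qp) (snd qp).
Proof.
  intros HC Hs. destruct qp as [q p]. unfold stp, TT, al; cbn [fst snd].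
  rewrite !minus_IZR, !plus_IZR, !mult_IZR, !plus_IZR, !minus_IZR, !mult_IZR.
  rewrite <- Hs. field. auto.
Qed.

Fixpoint itr (A B C D X Y : Z) (k : nat) (qp : Z * Z) : Z * Z :=
  match k with O => qp | S k => stp A B C D X Y (itr A B C D X Y k qp) end.

Lemma itr_T A B C D X Y s0 k qp : IZR C <> 0 -> s0 * s0 = IZR D ->
  TT A B C s0 (fst (itr A B C D X Y k qp)) (snd (itr A B C D X Y k qp)) =
  (IZR X + IZR (B * C * Y) * s0) ^ k * TT A B C s0 (fst qp) (snd qp).
Proof.
  intros HC Hs. induction k as [|k IH]; simpl.
  - ring.
  - rewrite stp_T by auto. rewrite IH. ring.
Qed.

Lemma UNIT (B C D : Z) : (2 <= D)%Z -> squarefree D -> B <> 0%Z -> C <> 0%Z ->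
  exists X Y, (X * X - D * (B * C * Y) * (B * C * Y) = 1)%Z /\
    Rabs (IZR X + IZR (B * C * Y) * sqrt (IZR D)) < 1.
Proof.
  intros HD Hsf HB HC.
  set (M := (D * (B * C) * (B * C))%Z).
  assert (HBC : (B * C <> 0)%Z) by (intro H; apply Z.eq_mul_0 in H; lia).
  assert (HM : (1 <= M)%Z).
  { unfold M. assert (HP : (0 < (B*C)*(B*C))%Z).
    { destruct (Z.lt_total (B*C) 0) as [H|[H|H]]; [apply Z.mul_neg_neg|contradiction|apply Z.mul_pos_pos]; auto. }
    replace (D * (B * C) * (B * C))%Z with (D * ((B * C) * (B * C)))%Z by ring.
    set (P := ((B*C)*(B*C))%Z) in *. nia. }
  assert (NSM : forall k L, (k*k = M*L*L)%Z -> L = 0%Z).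
  { intros k L E. assert (H : (B * C * L = 0)%Z).
    { apply (NS D HD Hsf k). rewrite E. unfold M. ring. }
    apply Z.eq_mul_0 in H. lia. }
  destruct (PELL M HM NSM) as [X [Y [HXY HY]]].
  set (s := sqrt (IZR D)).
  assert (Hs : s * s = IZR D) by (apply sqrt_sqrt; apply IZR_le; lia).
  assert (Hs0 : 0 < s) by (apply sqrt_lt_R0; apply IZR_lt; lia).
  assert (HE : (X * X - D * (B * C * Y) * (B * C * Y) = 1)%Z) by (rewrite <- HXY; unfold M; ring).
  assert (HEr : (IZR X + IZR (B * C * Y) * s) * (IZR X - IZR (B * C * Y) * s) = 1).
  { transitivity (IZR (X * X - D * (B * C * Y) * (B * C * Y))).
    - rewrite minus_IZR, !mult_IZR, <- Hs. ring.
    - rewrite HE. reflexivity. }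
  assert (HBCY : IZR (B * C * Y) <> 0) by (apply not_0_IZR; intro H; apply Z.eq_mul_0 in H; lia).
  set (e1 := IZR X + IZR (B * C * Y) * s) in *.
  set (e2 := IZR X - IZR (B * C * Y) * s) in *.
  assert (Hne : e1 <> e2).
  { unfold e1, e2. intro H. assert (IZR (B * C * Y) * s = 0) by lra.
    apply Rmult_integral in H0. destruct H0; lra. }
  destruct (Rlt_or_le (Rabs e1) 1) as [H1|H1].
  - exists X, Y. split; auto.
  - exists X, (- Y)%Z. split.
    + transitivity (X * X - D * (B * C * Y) * (B * C * Y))%Z; [ring|exact HE].
    + replace (IZR X + IZR (B * C * - Y) * s) with e2
        by (unfold e2; rewrite !mult_IZR, opp_IZR; ring).
      assert (Habs : Rabs e1 * Rabs e2 = 1) by (rewrite <- Rabs_mult, HEr; apply Rabs_R1).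
      destruct (Req_dec (Rabs e1) 1) as [E|E].
      * exfalso. apply Hne.
        destruct (Rcase_abs e1) as [Hl|Hr];
          [rewrite Rabs_left in E by auto | rewrite Rabs_right in E by auto].
        -- assert (Ee : e1 = -1) by lra. rewrite Ee in HEr |- *. lra.
        -- assert (Ee : e1 = 1) by lra. rewrite Ee in HEr |- *. lra.
      * assert (1 < Rabs e1) by lra. nra.
Qed.

Open Scope R_scope.

Lemma small_nz (A B C D q0 p0 : Z) : (0 < C)%Z -> B <> 0%Z -> (2 <= D)%Z -> squarefree D ->
  TT A B C (sqrt (IZR D)) q0 p0 * TT A B C (- sqrt (IZR D)) q0 p0 <> 0 ->
  forall r, 0 < r -> exists q p, q <> 0%Z /\ TT A B C (sqrt (IZR D)) q p <> 0 /\
    Rabs (TT A B C (sqrt (IZR D)) q p) < r /\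
    TT A B C (sqrt (IZR D)) q p * TT A B C (- sqrt (IZR D)) q p =
    TT A B C (sqrt (IZR D)) q0 p0 * TT A B C (- sqrt (IZR D)) q0 p0.
Proof.
  intros HC HB HD Hsf HN r Hr.
  set (s := sqrt (IZR D)) in *.
  assert (Hs : s * s = IZR D) by (apply sqrt_sqrt; apply IZR_le; lia).
  assert (Hs' : (- s) * (- s) = IZR D) by (rewrite <- Hs; ring).
  assert (HCr : IZR C <> 0) by (apply not_0_IZR; lia).
  destruct (UNIT B C D HD Hsf HB ltac:(lia)) as [X [Y [HXY Hlt]]].
  fold s in Hlt.
  set (e1 := IZR X + IZR (B * C * Y) * s) in *.
  set (e2 := IZR X + IZR (B * C * Y) * (- s)).
  assert (He : e1 * e2 = 1).
  { unfold e1, e2. transitivity (IZR (X * X - D * (B * C * Y) * (B * C * Y))).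
    - rewrite minus_IZR, !mult_IZR, <- Hs. ring.
    - rewrite HXY. reflexivity. }
  set (T0 := TT A B C s q0 p0) in *.
  set (T0' := TT A B C (- s) q0 p0) in *.
  assert (HT0 : T0 <> 0) by (intro E; apply HN; rewrite E; ring).
  assert (Hb : 0 < Rmin 1 r / Rabs T0).
  { apply Rdiv_lt_0_compat; [apply Rmin_pos; lra | apply Rabs_pos_lt; auto]. }
  destruct (pow_lt_1_zero e1 Hlt _ Hb) as [K HK].
  specialize (HK K (le_n K)).
  set (qp := itr A B C D X Y K (q0, p0)).
  pose proof (itr_T A B C D X Y s K (q0, p0) HCr Hs) as H1.
  pose proof (itr_T A B C D X Y (- s) K (q0, p0) HCr Hs') as H2.
  fold qp in H1, H2. cbn [fst snd] in H1, H2. fold e1 in H1. fold T0 in H1. fold e2 T0' in H2.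
  assert (He1 : e1 <> 0) by (intro E; rewrite E in He; lra).
  assert (Ht : TT A B C s (fst qp) (snd qp) <> 0).
  { rewrite H1. apply Rmult_integral_contrapositive. split; auto. apply pow_nonzero; auto. }
  assert (Htr : Rabs (TT A B C s (fst qp) (snd qp)) < Rmin 1 r).
  { rewrite H1, Rabs_mult.
    apply Rmult_lt_reg_r with (/ Rabs T0). { apply Rinv_0_lt_compat, Rabs_pos_lt; auto. }
    rewrite Rmult_assoc, Rinv_r by (apply Rabs_no_R0; auto). unfold Rdiv in HK. lra. }
  assert (Hr1 : Rmin 1 r <= 1) by apply Rmin_l.
  assert (Hr2 : Rmin 1 r <= r) by apply Rmin_r.
  exists (fst qp), (snd qp). split; [|split; [auto|split; [lra|]]].
  - intro Hq. apply Ht. unfold TT in *. rewrite Hq in *.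
    assert (Hp : snd qp = 0%Z).
    { assert (Rabs (IZR (snd qp)) < 1).
      { replace (IZR (snd qp)) with (- (0 * al A B C s - IZR (snd qp))) by ring.
        rewrite Rabs_Ropp. lra. }
      rewrite <- abs_IZR in H. apply lt_IZR in H. lia. }
    rewrite Hp. ring.
  - rewrite H1, H2. transitivity ((e1 * e2) ^ K * (T0 * T0')); [rewrite Rpow_mult_distr; ring|].
    rewrite He, pow1. ring.
Qed.

Lemma TT_neg A B C s0 q p : TT A B C s0 (- q) (- p) = - TT A B C s0 q p.
Proof. unfold TT. rewrite !opp_IZR. ring. Qed.

Lemma small_sgn (A B C D q0 p0 : Z) (pos : bool) : (0 < C)%Z -> B <> 0%Z -> (2 <= D)%Z -> squarefree D ->
  TT A B C (sqrt (IZR D)) q0 p0 * TT A B C (- sqrt (IZR D)) q0 p0 <> 0 ->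
  forall r, 0 < r -> exists q p, (if pos then (0 < q)%Z else (q < 0)%Z) /\ TT A B C (sqrt (IZR D)) q p <> 0 /\
    Rabs (TT A B C (sqrt (IZR D)) q p) < r /\
    TT A B C (sqrt (IZR D)) q p * TT A B C (- sqrt (IZR D)) q p =
    TT A B C (sqrt (IZR D)) q0 p0 * TT A B C (- sqrt (IZR D)) q0 p0.
Proof.
  intros HC HB HD Hsf HN r Hr.
  destruct (small_nz A B C D q0 p0 HC HB HD Hsf HN r Hr) as [q [p [Hq [Ht [Hr' HN']]]]].
  assert (Hflip : TT A B C (sqrt (IZR D)) (-q) (-p) <> 0 /\
     Rabs (TT A B C (sqrt (IZR D)) (-q) (-p)) < r /\
     TT A B C (sqrt (IZR D)) (-q) (-p) * TT A B C (- sqrt (IZR D)) (-q) (-p) =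
     TT A B C (sqrt (IZR D)) q0 p0 * TT A B C (- sqrt (IZR D)) q0 p0).
  { rewrite !TT_neg, Rabs_Ropp. split; [|split]; auto.
    - intro E; apply Ht; lra.
    - rewrite <- HN'. ring. }
  destruct pos; destruct (Z.lt_total q 0) as [Hl|[Hl|Hl]]; try contradiction.
  - exists (-q)%Z, (-p)%Z. split; [lia|exact Hflip].
  - exists q, p. auto.
  - exists q, p. auto.
  - exists (-q)%Z, (-p)%Z. split; [lia|exact Hflip].
Qed.

Lemma back (A B C D q0 p0 : Z) (pos : bool) : (0 < C)%Z -> B <> 0%Z -> (2 <= D)%Z -> squarefree D ->
  TT A B C (sqrt (IZR D)) q0 p0 * TT A B C (- sqrt (IZR D)) q0 p0 <> 0 ->
  A1 (al A B C (sqrt (IZR D)))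
    (((if pos then (-1)%R else 1%R) * (TT A B C (sqrt (IZR D)) q0 p0 * TT A B C (- sqrt (IZR D)) q0 p0)
      / (2 * IZR B * sqrt (IZR D) / IZR C))%R).
Proof.
  intros HC HB HD Hsf HN eps Heps.
  set (s := sqrt (IZR D)) in *.
  assert (Hs0 : 0 < s) by (apply sqrt_lt_R0; apply IZR_lt; lia).
  assert (HCr : IZR C <> 0) by (apply not_0_IZR; lia).
  assert (HBs : IZR B * s <> 0).
  { apply Rmult_integral_contrapositive; split; [apply not_0_IZR; auto | lra]. }
  set (dl := 2 * IZR B * s / IZR C).
  assert (Hdl : dl <> 0).
  { unfold dl. unfold Rdiv. intro E. apply Rmult_integral in E. destruct E as [E|E].
    - apply HBs. lra.
    - apply Rinv_neq_0_compat in HCr. contradiction. }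
  assert (Hr : 0 < Rmin 1 (eps * Rabs dl)).
  { apply Rmin_pos; [lra|]. apply Rmult_lt_0_compat; auto. apply Rabs_pos_lt; auto. }
  destruct (small_sgn A B C D q0 p0 pos HC HB HD Hsf HN _ Hr) as [q [p [Hq [Ht [Hrr HN']]]]].
  fold s in Ht, Hrr, HN'.
  assert (Hr1 : Rmin 1 (eps * Rabs dl) <= 1) by apply Rmin_l.
  assert (Hr2 : Rmin 1 (eps * Rabs dl) <= eps * Rabs dl) by apply Rmin_r.
  set (t := TT A B C s q p) in *.
  assert (Ht2 : Rabs (t ^ 2 / dl) < eps).
  { unfold Rdiv. rewrite Rabs_mult, Rabs_inv, <- RPow_abs.
    apply Rmult_lt_reg_r with (Rabs dl); [apply Rabs_pos_lt; auto|].
    rewrite Rmult_assoc, Rinv_l by (apply Rabs_no_R0; auto).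
    assert (0 <= Rabs t) by apply Rabs_pos. nra. }
  assert (Ht2nz : t ^ 2 / dl <> 0).
  { unfold Rdiv. apply Rmult_integral_contrapositive. split.
    - apply pow_nonzero; auto.
    - apply Rinv_neq_0_compat; auto. }
  exists (IZR (Z.abs q) * TT A B C s q p). split; [|split].
  - exists q, p. split; [destruct pos; lia|reflexivity].
  - destruct pos.
    + rewrite (key_pos A B C s q p HCr HBs Hq). fold dl t. rewrite HN'. intro E. apply Ht2nz.
      unfold Rdiv in *. lra.
    + rewrite (key_neg A B C s q p HCr HBs Hq). fold dl t. rewrite HN'. intro E. apply Ht2nz.
      unfold Rdiv in *. lra.
  - destruct pos.
    + rewrite (key_pos A B C s q p HCr HBs Hq). fold dl t. rewrite HN'.
      replace (t ^ 2 / dl - TT A B C s q0 p0 * TT A B C (- s) q0 p0 / dl -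
        -1 * (TT A B C s q0 p0 * TT A B C (- s) q0 p0) / dl) with (t ^ 2 / dl) by (field; auto).
      auto.
    + rewrite (key_neg A B C s q p HCr HBs Hq). fold dl t. rewrite HN'.
      replace (- (t ^ 2 / dl) + TT A B C s q0 p0 * TT A B C (- s) q0 p0 / dl -
        1 * (TT A B C s q0 p0 * TT A B C (- s) q0 p0) / dl) with (- (t ^ 2 / dl)) by (field; auto).
      rewrite Rabs_Ropp. auto.
Qed.

Open Scope R_scope.

Lemma fwd (A B C D : Z) (v : R) : (0 < C)%Z -> B <> 0%Z -> (2 <= D)%Z ->
  A1 (al A B C (sqrt (IZR D))) v ->
  exists q p, q <> 0%Z /\
    (v = - (TT A B C (sqrt (IZR D)) q p * TT A B C (- sqrt (IZR D)) q p) / (2 * IZR B * sqrt (IZR D) / IZR C) \/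
     v = (TT A B C (sqrt (IZR D)) q p * TT A B C (- sqrt (IZR D)) q p) / (2 * IZR B * sqrt (IZR D) / IZR C)).
Proof.
  intros HC HB HD HA. apply NNPP. intro Hno.
  set (s := sqrt (IZR D)) in *.
  assert (Hs : s * s = IZR D) by (apply sqrt_sqrt; apply IZR_le; lia).
  assert (Hs0 : 0 < s) by (apply sqrt_lt_R0; apply IZR_lt; lia).
  assert (HCr : IZR C <> 0) by (apply not_0_IZR; lia).
  assert (HCp : 0 < IZR C) by (apply IZR_lt; lia).
  assert (HBs : IZR B * s <> 0).
  { apply Rmult_integral_contrapositive; split; [apply not_0_IZR; auto | lra]. }
  set (dl := 2 * IZR B * s / IZR C) in *.
  assert (Hdl : dl <> 0).
  { unfold dl. unfold Rdiv. intro E. apply Rmult_integral in E. destruct E as [E|E].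
    - apply HBs. lra.
    - apply Rinv_neq_0_compat in HCr. contradiction. }
  assert (Hadl : 0 < Rabs dl) by (apply Rabs_pos_lt; auto).
  assert (HCC : 0 < IZR C * IZR C) by (apply Rmult_lt_0_compat; lra).
  assert (HdCC : 0 < Rabs dl * (IZR C * IZR C)) by (apply Rmult_lt_0_compat; lra).
  set (u := v * dl * (IZR C * IZR C)).
  destruct (Z_sep u) as [r0 [Hr0 Hsep]].
  set (r := r0 / (Rabs dl * (IZR C * IZR C))).
  assert (Hr : 0 < r).
  { unfold r. apply Rdiv_lt_0_compat; [auto|]. auto. }
  assert (Hw : forall q p w, q <> 0%Z ->
     (w = - (TT A B C s q p * TT A B C (- s) q p) / dl \/ w = (TT A B C s q p * TT A B C (- s) q p) / dl) ->
     r <= Rabs (w - v)).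
  { intros q p w Hq Hwv.
    set (z := ((q*A - p*C)*(q*A - p*C) - q*q*B*B*D)%Z).
    assert (HN : TT A B C s q p * TT A B C (- s) q p = IZR z / (IZR C * IZR C))
      by (apply Nm_int; auto).
    rewrite HN in Hwv.
    assert (Hz : exists z' : Z, w = IZR z' / (dl * (IZR C * IZR C))).
    { destruct Hwv as [E|E]; [exists (- z)%Z | exists z]; rewrite E; rewrite ?opp_IZR; field; split; auto. }
    destruct Hz as [z' Ez'].
    assert (Hne : IZR z' <> u).
    { intro E. apply Hno. exists q, p. split; auto. rewrite HN. unfold u in E.
      assert (v = w). { rewrite Ez', E. field. split; auto. }
      rewrite H. destruct Hwv; [left|right]; rewrite H0; reflexivity. }
    specialize (Hsep z' Hne).
    assert (Eq : IZR z' - u = (w - v) * (dl * (IZR C * IZR C))).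
    { unfold u. rewrite Ez'. field. split; auto. }
    rewrite Eq, Rabs_mult in Hsep. rewrite (Rabs_mult dl) in Hsep.
    rewrite (Rabs_right (IZR C * IZR C)) in Hsep by lra.
    unfold r. apply Rmult_le_reg_r with (Rabs dl * (IZR C * IZR C)); [lra|].
    unfold Rdiv. rewrite Rmult_assoc, Rinv_l by lra. lra. }
  set (c := Rmin 1 (r * Rabs dl / 2)).
  assert (Hc : 0 < c) by (apply Rmin_pos; [lra|]; apply Rdiv_lt_0_compat; [apply Rmult_lt_0_compat|]; lra).
  set (al0 := al A B C s).
  set (Bd := (Rabs v + 1) / c * (1 + Rabs al0) + Rabs v + 1).
  assert (HBd : 0 <= Bd).
  { unfold Bd. assert (0 <= (Rabs v + 1) / c * (1 + Rabs al0)).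
    { pose proof (Rabs_pos v); pose proof (Rabs_pos al0); apply Rmult_le_pos; [apply Rlt_le, Rdiv_lt_0_compat|]; lra. }
    pose proof (Rabs_pos v). lra. }
  destruct (archimed Bd) as [Hu1 Hu2].
  assert (Hup : (0 < up Bd)%Z) by (apply lt_IZR; lra).
  set (N := Z.to_nat (up Bd)).
  assert (HN : IZR (Z.of_nat N) = IZR (up Bd)) by (unfold N; rewrite Z2Nat.id by lia; reflexivity).
  destruct (box_sep (fun q p => IZR (Z.abs q) * TT A B C s q p) v N) as [r1 [Hr1 Hbox]].
  set (eps := Rmin (Rmin 1 (r / 2)) r1).
  assert (Heps : 0 < eps) by (apply Rmin_pos; [apply Rmin_pos|]; lra).
  destruct (HA eps Heps) as [y [[q [p [Hq Ey]]] [Hyv Hyd]]].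
  assert (He1 : eps <= 1) by (eapply Rle_trans; [apply Rmin_l|apply Rmin_l]).
  assert (He2 : eps <= r / 2) by (eapply Rle_trans; [apply Rmin_l|apply Rmin_r]).
  assert (He3 : eps <= r1) by apply Rmin_r.
  set (t := TT A B C s q p) in *.
  change (IZR q * al A B C (sqrt (IZR D)) - IZR p) with t in Ey.
  assert (Hyw : exists w, (w = - (t * TT A B C (- s) q p) / dl \/ w = (t * TT A B C (- s) q p) / dl)
                  /\ Rabs (y - w) = Rabs (t ^ 2 / dl)).
  { destruct (Z.lt_total q 0) as [Hl|[Hl|Hl]]; [|contradiction|].
    - exists ((t * TT A B C (- s) q p) / dl). split; [right; reflexivity|].
      rewrite Ey. unfold t. change (IZR q * al A B C s - IZR p) with (TT A B C s q p). rewrite (key_neg A B C s q p HCr HBs Hl). fold dl t.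
      rewrite <- Rabs_Ropp. f_equal. ring.
    - exists (- (t * TT A B C (- s) q p) / dl). split; [left; reflexivity|].
      rewrite Ey. unfold t. change (IZR q * al A B C s - IZR p) with (TT A B C s q p). rewrite (key_pos A B C s q p HCr HBs Hl). fold dl t.
      f_equal. field. auto. }
  destruct Hyw as [w [Hwc Hyw]].
  pose proof (Hw q p w Hq Hwc) as Hwv.
  assert (Hyw2 : r / 2 <= Rabs (y - w)).
  { assert (Rabs (w - v) <= Rabs (w - y) + Rabs (y - v)).
    { replace (w - v) with ((w - y) + (y - v)) by ring. apply Rabs_triang. }
    rewrite (Rabs_minus_sym w y) in H. lra. }
  rewrite Hyw in Hyw2.
  assert (Ht2 : r * Rabs dl / 2 <= t * t).
  { unfold Rdiv in Hyw2. rewrite Rabs_mult, Rabs_inv in Hyw2.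
    assert (Rabs (t ^ 2) = t * t) by (rewrite Rabs_right; [ring|]; apply Rle_ge; nra).
    rewrite H in Hyw2.
    assert (E : t * t = (t * t * / Rabs dl) * Rabs dl) by (field; lra).
    rewrite E. replace (r * Rabs dl / 2) with (r / 2 * Rabs dl) by (unfold Rdiv; ring).
    apply Rmult_le_compat_r; lra. }
  assert (Htc : c <= Rabs t).
  { destruct (Rlt_or_le (Rabs t) 1) as [H|H].
    - assert (Htt : t * t = Rabs t * Rabs t).
      { rewrite <- Rabs_mult. rewrite Rabs_right; [ring|]. apply Rle_ge. apply Rle_0_sqr. }
      assert (Rabs t * Rabs t <= Rabs t * 1).
      { apply Rmult_le_compat_l; [apply Rabs_pos|lra]. }
      assert (c <= r * Rabs dl / 2) by apply Rmin_r. lra.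
    - unfold c. eapply Rle_trans; [apply Rmin_l|]. lra. }
  assert (Hyb : Rabs y <= Rabs v + 1).
  { pose proof (Rabs_triang (y - v) v). replace (y - v + v) with y in H by ring. lra. }
  assert (Hq1 : 1 <= IZR (Z.abs q)) by (apply IZR_le; lia).
  assert (Hya : Rabs y = IZR (Z.abs q) * Rabs t).
  { rewrite Ey, Rabs_mult, (Rabs_right (IZR (Z.abs q))); [reflexivity|lra]. }
  assert (HqB : IZR (Z.abs q) <= (Rabs v + 1) / c).
  { apply Rmult_le_reg_r with c; auto. unfold Rdiv. rewrite Rmult_assoc, Rinv_l by lra.
    assert (IZR (Z.abs q) * c <= IZR (Z.abs q) * Rabs t) by (apply Rmult_le_compat_l; lra).
    lra. }
  assert (Htb : Rabs t <= Rabs v + 1).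
  { assert (1 * Rabs t <= IZR (Z.abs q) * Rabs t) by (apply Rmult_le_compat_r; [apply Rabs_pos|lra]).
    lra. }
  assert (HX : 0 <= (Rabs v + 1) / c) by (apply Rlt_le, Rdiv_lt_0_compat; [pose proof (Rabs_pos v)|]; lra).
  assert (Hal : 0 <= Rabs al0) by apply Rabs_pos.
  assert (HqBd : IZR (Z.abs q) <= Bd).
  { unfold Bd. assert (0 <= (Rabs v + 1) / c * Rabs al0) by (apply Rmult_le_pos; lra).
    pose proof (Rabs_pos v). lra. }
  assert (HpBd : Rabs (IZR p) <= Bd).
  { assert (Ep : IZR p = IZR q * al0 - t) by (unfold t, TT, al0; ring).
    rewrite Ep.
    assert (Rabs (IZR q * al0 - t) <= Rabs (IZR q * al0) + Rabs t).
    { unfold Rminus. rewrite <- (Rabs_Ropp t). apply Rabs_triang. }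
    rewrite Rabs_mult, <- abs_IZR in H.
    assert (IZR (Z.abs q) * Rabs al0 <= (Rabs v + 1) / c * Rabs al0) by (apply Rmult_le_compat_r; lra).
    unfold Bd. lra. }
  assert (Hqn : (Z.abs q <= Z.of_nat N)%Z).
  { assert (IZR (Z.abs q) < IZR (Z.of_nat N)) by (rewrite HN; lra). apply lt_IZR in H. lia. }
  assert (Hpn : (Z.abs p <= Z.of_nat N)%Z).
  { assert (IZR (Z.abs p) < IZR (Z.of_nat N)) by (rewrite HN, abs_IZR; lra). apply lt_IZR in H. lia. }
  assert (Ey' : IZR (Z.abs q) * TT A B C s q p = y) by (rewrite Ey; reflexivity).
  assert (Hf : IZR (Z.abs q) * TT A B C s q p <> v) by (rewrite Ey'; auto).
  specialize (Hbox q p Hqn Hpn Hf). cbv beta in Hbox. rewrite Ey' in Hbox.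
  lra.
Qed.

Open Scope R_scope.

Lemma Q2R_inj z : Q2R (inject_Z z) = IZR z.
Proof. unfold Q2R, inject_Z. cbn [Qnum Qden]. change (IZR (Z.pos 1)) with 1. field. Qed.

Lemma Q2R_2 : Q2R 2 = 2.
Proof. unfold Q2R. cbn [Qnum Qden]. change (IZR (Z.pos 1)) with 1. field. Qed.

Lemma Q2R_nz q : ~ (q == 0)%Q -> Q2R q <> 0.
Proof. intros H E. apply H. apply eqR_Qeq. rewrite E. unfold Q2R. simpl. ring. Qed.

Lemma Q2R_ex q : Q2R q = IZR (Qnum q) / IZR (Z.pos (Qden q)).
Proof. reflexivity. Qed.

Lemma norm_nz (D : Z) (x y : Q) : (2 <= D)%Z -> squarefree D ->
  ~ Kzero (x, y) -> Q2R x * Q2R x - IZR D * Q2R y * Q2R y <> 0.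
Proof.
  intros HD Hsf Hz E. apply Hz. unfold Kzero; cbn [fst snd].
  set (X := Q2R x) in *. set (Y := Q2R y) in *.
  assert (HX : IZR (Qnum x) = X * IZR (Z.pos (Qden x))).
  { unfold X, Q2R. field. apply not_0_IZR. lia. }
  assert (HY : IZR (Qnum y) = Y * IZR (Z.pos (Qden y))).
  { unfold Y, Q2R. field. apply not_0_IZR. lia. }
  assert (Hint : ((Qnum x * Z.pos (Qden y)) * (Qnum x * Z.pos (Qden y)) =
                 D * (Qnum y * Z.pos (Qden x)) * (Qnum y * Z.pos (Qden x)))%Z).
  { apply eq_IZR. rewrite !mult_IZR, HX, HY.
    apply Rminus_diag_uniq.
    transitivity ((X * X - IZR D * Y * Y) * (IZR (Z.pos (Qden x)) * IZR (Z.pos (Qden y))) ^ 2); [ring|].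
    rewrite E. ring. }
  apply (NS D HD Hsf) in Hint. apply Z.eq_mul_0 in Hint. destruct Hint as [Hy|Hy]; [|lia].
  assert (HY0 : Y = 0).
  { unfold Y, Q2R. rewrite Hy. simpl. ring. }
  rewrite HY0 in E. assert (HX0 : X = 0) by nra.
  split; apply eqR_Qeq; [fold X; rewrite HX0 | fold Y; rewrite HY0]; unfold Q2R; simpl; ring.
Qed.

Lemma Q2R_0 : Q2R 0 = 0.
Proof. unfold Q2R. simpl. ring. Qed.

Open Scope R_scope.

Theorem theorem4 (a b : Q) (D : Z) :
  ~ (b == 0)%Q -> (2 <= D)%Z -> squarefree D ->
  forall v : R,
    A1 (Kreal D (a, b)) v <->
    exists s : Kelt, in_dual D (a, b) s /\ ~ Kzero s /\
      (v = 2 * Q2R b * sqrt (IZR D) * Q2R (Knorm D s) \/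
       v = - (2 * Q2R b * sqrt (IZR D) * Q2R (Knorm D s))).
Proof.
  intros Hb HD Hsf v.
  set (A := (Qnum a * Z.pos (Qden b))%Z).
  set (B := (Qnum b * Z.pos (Qden a))%Z).
  set (C := (Z.pos (Qden a) * Z.pos (Qden b))%Z).
  assert (HC : (0 < C)%Z) by (unfold C; lia).
  assert (HCr : IZR C <> 0) by (apply not_0_IZR; lia).
  assert (HB : B <> 0%Z).
  { unfold B. intro E. apply Z.eq_mul_0 in E. destruct E as [E|E]; [|lia].
    apply Hb. unfold Qeq. simpl. rewrite E. reflexivity. }
  assert (HBr : IZR B <> 0) by (apply not_0_IZR; auto).
  assert (Hra : Q2R a = IZR A / IZR C).
  { unfold Q2R, A, C. rewrite !mult_IZR. field. split; apply not_0_IZR; lia. }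
  assert (Hrb : Q2R b = IZR B / IZR C).
  { unfold Q2R, B, C. rewrite !mult_IZR. field. split; apply not_0_IZR; lia. }
  assert (Hbr : Q2R b <> 0) by (apply Q2R_nz; auto).
  set (s := sqrt (IZR D)).
  assert (Hs : s * s = IZR D) by (apply sqrt_sqrt; apply IZR_le; lia).
  assert (Hs0 : 0 < s) by (apply sqrt_lt_R0; apply IZR_lt; lia).
  assert (HDr : IZR D <> 0) by (apply not_0_IZR; lia).
  assert (Hal : Kreal D (a, b) = al A B C s).
  { unfold Kreal, al; cbn [fst snd]. rewrite Hra, Hrb. fold s. field. auto. }
  rewrite Hal. split.
  - intro HA. destruct (fwd A B C D v HC HB HD HA) as [q [p [Hq Hv]]]. fold s in Hv.
    assert (H2 : ~ (inject_Z 2 == 0)%Q) by (intro E; discriminate E).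
    assert (Hden : ~ (inject_Z 2 * inject_Z D * b == 0)%Q).
    { intro E. apply Qeq_eqR in E. rewrite !Q2R_mult, !Q2R_inj in E.
      unfold Q2R at 2 in E. simpl in E. rewrite Rmult_0_l in E.
      apply Rmult_integral in E. destruct E as [E|E]; [|lra].
      apply Rmult_integral in E. destruct E as [E|E]; lra. }
    set (x := (inject_Z q / inject_Z 2)%Q).
    set (y := ((inject_Z p - inject_Z q * a) / (inject_Z 2 * inject_Z D * b))%Q).
    assert (HX : Q2R x = IZR q / 2).
    { unfold x. rewrite Q2R_div by auto. rewrite !Q2R_inj. reflexivity. }
    assert (HY : Q2R y = (IZR p - IZR q * Q2R a) / (2 * IZR D * Q2R b)).
    { unfold y. rewrite Q2R_div by auto. rewrite Q2R_minus, !Q2R_mult, !Q2R_inj. reflexivity. }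
    exists (x, y). split; [|split].
    + intros y' [m [n Ey']]. subst y'. exists (q * m + p * n)%Z. apply eqR_Qeq.
      unfold Ktrace, Kmul, Kadd, Kof_Z, Kscale_Z; cbn [fst snd].
      rewrite Q2R_mult, Q2R_2, !Q2R_plus, !Q2R_mult, !Q2R_plus, !Q2R_mult, HX, HY, !Q2R_inj.
      rewrite ?mult_IZR, ?plus_IZR, ?mult_IZR, ?Q2R_0. field. auto.
    + intros [H0 _]. cbn [fst] in H0. apply Qeq_eqR in H0. rewrite HX in H0.
      unfold Q2R at 1 in H0. simpl in H0. apply Hq. apply eq_IZR. lra.
    + unfold Knorm; cbn [fst snd]. rewrite Q2R_minus, !Q2R_mult, HX, HY, Q2R_inj.
      rewrite Hra, Hrb.
      destruct Hv as [Hv|Hv]; [left|right]; rewrite Hv; unfold TT, al; rewrite <- Hs; field;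
        repeat split; auto; lra.
  - intros [[x y] [Hdual [Hnz Hv]]].
    destruct (Hdual (Kadd (Kof_Z 1) (Kscale_Z 0 (a, b)))) as [k1 Hk1]; [exists 1%Z, 0%Z; reflexivity|].
    destruct (Hdual (Kadd (Kof_Z 0) (Kscale_Z 1 (a, b)))) as [k2 Hk2]; [exists 0%Z, 1%Z; reflexivity|].
    apply Qeq_eqR in Hk1. apply Qeq_eqR in Hk2.
    unfold Ktrace, Kmul, Kadd, Kof_Z, Kscale_Z in Hk1, Hk2; cbn [fst snd] in Hk1, Hk2.
    rewrite Q2R_mult, Q2R_2, !Q2R_plus, !Q2R_mult, !Q2R_plus, !Q2R_mult, !Q2R_inj in Hk1, Hk2.
    assert (HN : Q2R (Knorm D (x, y)) = Q2R x * Q2R x - IZR D * Q2R y * Q2R y).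
    { unfold Knorm; cbn [fst snd]. rewrite Q2R_minus, !Q2R_mult, Q2R_inj. ring. }
    pose proof (norm_nz D x y HD Hsf Hnz) as HNz.
    set (Nm := TT A B C s k1 k2 * TT A B C (- s) k1 k2).
    set (dl := 2 * IZR B * s / IZR C).
    assert (ENm : Nm = - (dl * dl) * Q2R (Knorm D (x, y))).
    { rewrite HN. unfold Nm, dl, TT, al. rewrite <- Hk1, <- Hk2. rewrite Hra, Hrb. rewrite <- Hs. rewrite ?Q2R_0. field. auto. }
    assert (Hdl : dl <> 0).
    { unfold dl. unfold Rdiv. intro E. apply Rmult_integral in E. destruct E as [E|E].
      - apply Rmult_integral in E. destruct E as [E|E]; [|lra].
        apply Rmult_integral in E. destruct E as [E|E]; lra.
      - apply Rinv_neq_0_compat in HCr. contradiction. }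
    assert (HNm : Nm <> 0).
    { rewrite ENm. intro E. apply Rmult_integral in E. destruct E as [E|E].
      - assert (dl * dl = 0) by lra. apply Rmult_integral in H. destruct H; contradiction.
      - rewrite HN in E. contradiction. }
    assert (Edl : 2 * Q2R b * s = dl) by (unfold dl; rewrite Hrb; field; auto).
    rewrite Edl in Hv.
    destruct Hv as [Hv|Hv].
    + pose proof (back A B C D k1 k2 true HC HB HD Hsf HNm) as Hback. fold s dl Nm in Hback.
      replace v with ((-1) * Nm / dl); auto. rewrite Hv, ENm. field. auto.
    + pose proof (back A B C D k1 k2 false HC HB HD Hsf HNm) as Hback. fold s dl Nm in Hback.
      replace v with (1 * Nm / dl); auto. rewrite Hv, ENm. field. auto.
Qed.
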